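(* Consider the two-channel (Paris metro pricing) model described in the context, where $\phi$ is an increasing concave differentiable function with $\phi(x)\ge 0$ for all $x\ge0$. Then in the ISP's revenue maximization problem, the optimal consumer threshold is always $x_t=x_0$ (for any value of the CP cost parameter $a$, which does not enter the problem).
   Context: Model: fix $\gamma>2$, $\beta>2$, $\lambda>0$. Consumer types have density $x^{-\gamma}$ on $x\ge x_0:=(\frac{1}{\gamma-1})^{\frac{1}{\gamma-1}}$, CP types density $y^{-\beta}$ on $y\ge y_0:=(\frac{1}{\beta-1})^{\frac{1}{\beta-1}}$; $\bar X=\int_{x_0}^\infty x^{1-\gamma}dx$, $\bar Y=\int_{y_0}^\infty y^{1-\beta}dy$, $T_0=\bar X\bar Y$. The ISP splits capacity $1$ into a pay channel of capacity $B_1\in[0,1]$ and a free channel of capacity $1-B_1$. Consumers of type $\ge x_t$ participate; CPs of type $\ge y_t$ use the pay channel (paying $by$ for type $y$), CPs of type in $[y_0,y_t)$ use the free channel. Channel traffics are $T_1=\sqrt{B_1T_0\int_{x_t}^\infty x^{1-\gamma}dx\int_{y_t}^\infty y^{1-\beta}dy}$ and $T_2=\sqrt{(1-B_1)T_0\int_{x_t}^\infty x^{1-\gamma}dx\int_{y_0}^{y_t}y^{1-\beta}dy}$, with speeds $B_1T_0/T_1$ and $(1-B_1)T_0/T_2$. The membership fee and CP fee are set so threshold types are indifferent: $c=\phi\big((\int_{y_0}^{y_t}\frac{(1-B_1)T_0}{T_2}y^{1-\beta}dy+\int_{y_t}^\infty\frac{B_1T_0}{T_1}y^{1-\beta}dy)x_t\big)$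 and $\lambda y_t\int_{x_t}^\infty\frac{B_1T_0}{T_1}x^{1-\gamma}dx-by_t=\lambda y_t\int_{x_t}^\infty\frac{(1-B_1)T_0}{T_2}x^{1-\gamma}dx$. The ISP solves $\max_{x_t,y_t,B_1} R=c\int_{x_t}^\infty x^{-\gamma}dx+b\int_{y_t}^\infty y^{1-\beta}dy$ subject to $x_t\ge x_0$, $y_t\ge y_0$, $\frac{B_1T_0}{T_1}\ge\frac{(1-B_1)T_0}{T_2}$, $0\le B_1\le1$. *)

(* Defs.v *)
From Stdlib Require Import Reals.
From Coquelicot Require Import Coquelicot.
Open Scope R_scope.

Definition Iinf (f : R -> R) (a : R) : R :=
  RInt_gen f (at_point a) (Rbar_locally p_infty).

Definition x0 (gam : R) : R := Rpower (1 / (gam - 1)) (1 / (gam - 1)).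
Definition y0 (bet : R) : R := Rpower (1 / (bet - 1)) (1 / (bet - 1)).

Definition wx (gam x : R) : R := Rpower x (1 - gam).
Definition wy (bet y : R) : R := Rpower y (1 - bet).
Definition dx (gam x : R) : R := Rpower x (- gam).

Definition Xbar (gam : R) : R := Iinf (wx gam) (x0 gam).
Definition Ybar (bet : R) : R := Iinf (wy bet) (y0 bet).
Definition T0 (gam bet : R) : R := Xbar gam * Ybar bet.

Definition T1 (gam bet xt yt B1 : R) : R :=
  sqrt (B1 * T0 gam bet * Iinf (wx gam) xt * Iinf (wy bet) yt).
Definition T2 (gam bet xt yt B1 : R) : R :=
  sqrt ((1 - B1) * T0 gam bet * Iinf (wx gam) xt * RInt (wy bet) (y0 bet) yt).

Definition s1 (gam bet xt yt B1 : R) : R := B1 * T0 gam bet / T1 gam bet xt yt B1.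
Definition s2 (gam bet xt yt B1 : R) : R := (1 - B1) * T0 gam bet / T2 gam bet xt yt B1.

(* membership fee: threshold consumer indifferent *)
Definition cfee (phi : R -> R) (gam bet xt yt B1 : R) : R :=
  phi ((RInt (fun y => s2 gam bet xt yt B1 * wy bet y) (y0 bet) yt
        + Iinf (fun y => s1 gam bet xt yt B1 * wy bet y) yt) * xt).

(* CP fee b: the unique solution (yt > 0) of
   lam*yt*Int s1 x^{1-g} - b*yt = lam*yt*Int s2 x^{1-g} *)
Definition bfee (lam gam bet xt yt B1 : R) : R :=
  (lam * yt * Iinf (fun x => s1 gam bet xt yt B1 * wx gam x) xt
   - lam * yt * Iinf (fun x => s2 gam bet xt yt B1 * wx gam x) xt) / yt.

Definition revenue (phi : R -> R) (lam gam bet xt yt B1 : R) : R :=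
  cfee phi gam bet xt yt B1 * Iinf (dx gam) xt
  + bfee lam gam bet xt yt B1 * Iinf (wy bet) yt.

Definition feasible (gam bet xt yt B1 : R) : Prop :=
  x0 gam <= xt /\ y0 bet <= yt /\
  s1 gam bet xt yt B1 >= s2 gam bet xt yt B1 /\ 0 <= B1 <= 1.

(* Main.v *)
Require Import Defs.
From Stdlib Require Import Reals Lra.
From Coquelicot Require Import Coquelicot.
From Stdlib Require Import ssreflect.
Open Scope R_scope.

Lemma Rpower_pos x p : 0 < Rpower x p.
Proof. unfold Rpower; apply exp_pos. Qed.

Lemma der_pow p x : 0 < x -> is_derive (fun y => Rpower y p) x (p * Rpower x (p - 1)).
Proof. intro Hx; apply is_derive_Reals, derivable_pt_lim_power; auto. Qed.

Lemma cont_pow p x : 0 < x -> continuous (fun y => Rpower y p) x.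
Proof. intro Hx; apply: (@ex_derive_continuous R_AbsRing R_NormedModule); eexists; apply der_pow; auto. Qed.

Lemma lim_pow_inf q : q < 0 -> is_lim (fun x => Rpower x q) p_infty 0.
Proof.
  intro Hq. unfold Rpower.
  apply (is_lim_comp (fun y => exp y) (fun x => q * ln x) p_infty 0 m_infty).
  - apply is_lim_exp_m.
  - replace m_infty with (Rbar_mult q p_infty).
    + apply is_lim_mult. apply is_lim_const. apply is_lim_ln_p.
      simpl. lra.
    + simpl. destruct (Rle_dec 0 q) as [H|H]; [exfalso; lra|]. reflexivity.
  - exists 0. intros. simpl. discriminate.
Qed.

Lemma Iinf_pow p a : p < -1 -> 0 < a ->
  is_RInt_gen (fun x => Rpower x p) (at_point a) (Rbar_locally p_infty)
    (- Rpower a (p+1)/(p+1)).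
Proof.
  intros Hp Ha.
  set F := fun y => Rpower y (p+1) * / (p+1).
  have dF: forall y, 0 < y -> is_derive F y (Rpower y p).
  { intros y Hy. have := der_pow (p+1) y Hy => H.
    have H2 := is_derive_scal (fun y => Rpower y (p+1)) y (/ (p+1)) ((p + 1) * Rpower y (p + 1 - 1)) H.
    eapply is_derive_ext; last first.
    - replace (Rpower y p) with ((/ (p + 1)) * ((p + 1) * Rpower y (p + 1 - 1))). exact H2.
      replace (p+1-1) with p by ring. field. lra.
    - intro t. rewrite /F /=. ring. }
  have DF: forall y, 0 < y -> Derive F y = Rpower y p.
  { intros y Hy. apply is_derive_unique, dF, Hy. }
  apply (is_RInt_gen_ext (Derive F)).
  { apply (Filter_prod _ _ _ (fun x => x = a) (fun y => 0 < y)).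
    - reflexivity.
    - exists 0. auto.
    - intros x y -> Hy z Hz. simpl in Hz. apply DF.
      have : 0 < Rmin a y by apply Rmin_glb_lt. lra. }
  replace (- Rpower a (p+1)/(p+1)) with (0 - F a) by (rewrite /F; field; lra).
  apply is_RInt_gen_Derive.
  - apply (Filter_prod _ _ _ (fun x => x = a) (fun y => 0 < y)).
    + reflexivity.
    + exists 0. auto.
    + intros x y -> Hy z Hz. simpl in Hz. eexists. apply dF.
      have : 0 < Rmin a y by apply Rmin_glb_lt. lra.
  - apply (Filter_prod _ _ _ (fun x => x = a) (fun y => 0 < y)).
    + reflexivity.
    + exists 0. auto.
    + intros x y -> Hy z Hz. simpl in Hz.
      have Hz0 : 0 < z by (have : 0 < Rmin a y by apply Rmin_glb_lt); lra.
      apply (continuous_ext_loc (Derive F) (fun y => Rpower y p)).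
      * have := open_gt 0 z Hz0. apply filter_imp. intros t Ht. symmetry. apply DF, Ht.
      * apply cont_pow, Hz0.
  - intros P HP. rewrite /filtermap /at_point. apply locally_singleton, HP.
  - have : is_lim F p_infty 0.
    { rewrite /F. replace (Finite 0) with (Rbar_mult 0 (/ (p+1))).
      apply is_lim_scal_r. apply lim_pow_inf. lra.
      simpl. f_equal. ring. }
    exact.
Qed.

Lemma Iinf_c c p a : p < -1 -> 0 < a ->
  RInt_gen (fun x => c * Rpower x p) (at_point a) (Rbar_locally p_infty)
   = c * (- Rpower a (p+1)/(p+1)).
Proof.
  intros Hp Ha. apply is_RInt_gen_unique.
  apply (is_RInt_gen_scal (fun x => Rpower x p) c _ (Iinf_pow p a Hp Ha)).
Qed.

Lemma Iinf_1 p a : p < -1 -> 0 < a ->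
  RInt_gen (fun x => Rpower x p) (at_point a) (Rbar_locally p_infty)
   = (- Rpower a (p+1)/(p+1)).
Proof.
  intros Hp Ha. apply is_RInt_gen_unique. apply Iinf_pow; auto.
Qed.

Definition Af g x := Rpower x (2-g)/(g-2).
Definition Df g x := Rpower x (1-g)/(g-1).
Definition Yf b yt := RInt (wy b) (y0 b) yt.

Lemma IA g x c : 2 < g -> 0 < x -> Iinf (fun y => c * Rpower y (1-g)) x = c * Af g x.
Proof. intros Hg Hx. rewrite /Iinf Iinf_c; try lra. rewrite /Af.
  replace (1-g+1) with (2-g) by ring. field. lra. Qed.

Lemma IA1 g x : 2 < g -> 0 < x -> Iinf (fun y => Rpower y (1-g)) x = Af g x.
Proof. intros Hg Hx. rewrite /Iinf Iinf_1; try lra. rewrite /Af.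
  replace (1-g+1) with (2-g) by ring. field. lra. Qed.

Lemma ID g x : 2 < g -> 0 < x -> Iinf (dx g) x = Df g x.
Proof. intros Hg Hx. rewrite /Iinf /dx Iinf_1; try lra. rewrite /Df.
  replace (-g+1) with (1-g) by ring. field. lra. Qed.

Lemma Af_pos g x : 2 < g -> 0 < x -> 0 < Af g x.
Proof. intros. rewrite /Af. apply Rdiv_lt_0_compat. apply Rpower_pos. lra. Qed.
Lemma Df_pos g x : 2 < g -> 0 < x -> 0 < Df g x.
Proof. intros. rewrite /Df. apply Rdiv_lt_0_compat. apply Rpower_pos. lra. Qed.

Lemma x0_pos g : 0 < x0 g.
Proof. apply Rpower_pos. Qed.
Lemma y0_pos b : 0 < y0 b.
Proof. apply Rpower_pos. Qed.

Lemma T0_pos g b : 2 < g -> 2 < b -> 0 < T0 g b.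
Proof. intros. rewrite /T0 /Xbar /Ybar /wx /wy IA1 ?IA1; try apply x0_pos; try apply y0_pos; auto.
  apply Rmult_lt_0_compat; apply Af_pos; auto. apply x0_pos. apply y0_pos. Qed.

Lemma exYf b yt : y0 b <= yt -> ex_RInt (wy b) (y0 b) yt.
Proof. intros H. apply: (@ex_RInt_continuous R_CompleteNormedModule). intros z Hz. rewrite /wy. apply cont_pow.
  have := y0_pos b. rewrite Rmin_left in Hz; lra. Qed.

Lemma Yf_nonneg b yt : y0 b <= yt -> 0 <= Yf b yt.
Proof. intros H. apply RInt_ge_0; auto. apply exYf; auto. intros. rewrite /wy. left; apply Rpower_pos. Qed.

Lemma Yf_c b yt c : y0 b <= yt -> RInt (fun y => c * wy b y) (y0 b) yt = c * Yf b yt.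
Proof. intros H. have := @RInt_scal R_CompleteNormedModule (wy b) (y0 b) yt c (exYf b yt H). done. Qed.

Lemma sqdiv P c q : 0 <= P -> 0 < c -> 0 <= q -> P / sqrt (P*c*q) = (sqrt P / sqrt q) / sqrt c.
Proof.
  intros HP Hc Hq.
  destruct HP as [HP|HP]; [|subst; rewrite sqrt_0 /Rdiv !Rmult_0_l; ring].
  destruct Hq as [Hq|Hq]; [|subst; rewrite Rmult_0_r sqrt_0 /Rdiv Rinv_0 !Rmult_0_r Rmult_0_l; ring].
  rewrite !sqrt_mult_alt; try lra; try (apply Rmult_le_pos; lra).
  have h1 := sqrt_lt_R0 P HP. have h2 := sqrt_lt_R0 c Hc. have h3 := sqrt_lt_R0 q Hq.
  rewrite -{1}(sqrt_sqrt P); try lra. field. lra.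
Qed.

Lemma s1_eq g b x yt B1 : 2 < g -> 2 < b -> 0 < x -> y0 b <= yt -> 0 <= B1 ->
  s1 g b x yt B1 = (sqrt (B1 * T0 g b) / sqrt (Af b yt)) / sqrt (Af g x).
Proof.
  intros Hg Hb Hx Hy HB. have Hy0 := y0_pos b.
  rewrite /s1 /T1 /wx /wy IA1 // IA1 //; try lra.
  rewrite -(sqdiv (B1 * T0 g b) (Af g x) (Af b yt)); auto.
  apply Rmult_le_pos; auto. left; apply T0_pos; auto.
  apply Af_pos; auto. left; apply Af_pos; lra.
Qed.

Lemma s2_eq g b x yt B1 : 2 < g -> 2 < b -> 0 < x -> y0 b <= yt -> B1 <= 1 ->
  s2 g b x yt B1 = (sqrt ((1-B1) * T0 g b) / sqrt (Yf b yt)) / sqrt (Af g x).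
Proof.
  intros Hg Hb Hx Hy HB. have Hy0 := y0_pos b.
  rewrite /s2 /T2 /wx IA1 //.
  rewrite -(sqdiv ((1-B1) * T0 g b) (Af g x) (Yf b yt)); auto.
  apply Rmult_le_pos; try lra. left; apply T0_pos; auto.
  apply Af_pos; auto. apply Yf_nonneg; auto.
Qed.

Lemma alg1 lam yt k1 k2 sA A Yp : A = sA * sA -> sA <> 0 -> yt <> 0 ->
  (lam * yt * (k1 / sA * A) - lam * yt * (k2 / sA * A)) / yt * Yp = lam * (k1 - k2) * sA * Yp.
Proof. intros -> H1 H2. field. auto. Qed.

Lemma rev_eq phi lam g b x yt B1 : 2 < g -> 2 < b -> 0 < x -> y0 b <= yt -> 0 <= B1 <= 1 ->
  revenue phi lam g b x yt B1 =
  phi ((sqrt ((1-B1) * T0 g b) / sqrt (Yf b yt) * Yf b yt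
        + sqrt (B1 * T0 g b) / sqrt (Af b yt) * Af b yt) * x / sqrt (Af g x)) * Df g x
  + lam * (sqrt (B1 * T0 g b) / sqrt (Af b yt) - sqrt ((1-B1) * T0 g b) / sqrt (Yf b yt))
     * sqrt (Af g x) * Af b yt.
Proof.
  intros Hg Hb Hx Hy HB. have Hy0 := y0_pos b.
  rewrite /revenue /cfee /bfee Yf_c //.
  rewrite /wy /wx !IA //; try lra.
  rewrite ID // IA1 //; try lra.
  rewrite s1_eq //; try lra. rewrite s2_eq //; try lra.
  have HA := Af_pos g x Hg Hx.
  have HsA := sqrt_lt_R0 _ HA.
  rewrite alg1; [| rewrite sqrt_sqrt; lra | lra | lra].
  f_equal. f_equal. f_equal. rewrite /Rdiv. ring.
Qed.

Lemma divnn a b : 0 <= a -> 0 <= b -> 0 <= a / b.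
Proof. intros Ha Hb. apply Rmult_le_pos; auto. destruct Hb as [Hb|<-].
  left; apply Rinv_0_lt_compat; auto. rewrite Rinv_0; lra. Qed.

Theorem theorem6 (gam bet lam : R) (phi : R -> R) :
  2 < gam -> 2 < bet -> 0 < lam ->
  (forall u v, 0 <= u -> u < v -> phi u < phi v) ->
  (forall u v t, 0 <= u -> 0 <= v -> 0 <= t <= 1 ->
     t * phi u + (1 - t) * phi v <= phi (t * u + (1 - t) * v)) ->
  (forall u, 0 < u -> ex_derive phi u) ->
  (forall u, 0 <= u -> 0 <= phi u) ->
  forall xt yt B1 : R,
    feasible gam bet xt yt B1 ->
    (forall xt' yt' B1', feasible gam bet xt' yt' B1' ->
       revenue phi lam gam bet xt' yt' B1' <= revenue phi lam gam bet xt yt B1) ->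
    xt = x0 gam.
Proof.
  intros Hg Hb Hl Hmono Hconc _ Hnn xt yt B1 [Hx [Hy [Hs HB]]] Hopt.
  have Hx0 := x0_pos gam. have Hy0 := y0_pos bet.
  destruct (Rle_lt_or_eq_dec _ _ Hx) as [Hlt|]; [exfalso|auto].
  have Hxt : 0 < xt by lra.
  have HT := T0_pos gam bet Hg Hb.
  have R1 := rev_eq phi lam gam bet xt yt B1 Hg Hb Hxt Hy HB.
  have R0 := rev_eq phi lam gam bet (x0 gam) yt B1 Hg Hb Hx0 Hy HB.
  rewrite s1_eq // in Hs; try lra. rewrite s2_eq // in Hs; try lra.
  have Hopt0 := Hopt (x0 gam) yt B1.
  rewrite /feasible in Hopt0. rewrite s1_eq in Hopt0; try lra. rewrite s2_eq in Hopt0; try lra.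
  have HA0 := Af_pos gam _ Hg Hx0. have HsA0 := sqrt_lt_R0 _ HA0.
  have HAt := Af_pos gam _ Hg Hxt. have HsAt := sqrt_lt_R0 _ HAt.
  have HYp := Af_pos bet _ Hb (ltac:(lra) : 0 < yt).
  have HYF := Yf_nonneg bet yt Hy.
  set k1 := sqrt (B1 * T0 gam bet) / sqrt (Af bet yt) in R1 R0 Hs Hopt0.
  set k2 := sqrt ((1 - B1) * T0 gam bet) / sqrt (Yf bet yt) in R1 R0 Hs Hopt0.
  have Hk1 : 0 <= k1 by apply divnn; apply sqrt_pos.
  have Hk2 : 0 <= k2 by apply divnn; apply sqrt_pos.
  have Hk : k2 <= k1.
  { have : k2 / sqrt (Af gam xt) * sqrt (Af gam xt) <= k1 / sqrt (Af gam xt) * sqrt (Af gam xt).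
    { apply Rmult_le_compat_r; lra. }
    have E : forall z, z / sqrt (Af gam xt) * sqrt (Af gam xt) = z by intros; field; lra.
    rewrite !E; lra. }
  set Yp := Af bet yt in R1 R0 HYp. set YF := Yf bet yt in R1 R0 HYF.
  set K := k2 * YF + k1 * Yp in R1 R0.
  have HK : 0 <= K by rewrite /K; have := Rmult_le_pos _ _ Hk2 HYF; have := Rmult_le_pos _ _ Hk1 (Rlt_le _ _ HYp); lra.
  set r := xt / x0 gam.
  have Hr : 1 < r. { rewrite /r. apply (Rmult_lt_reg_r (x0 gam)); auto. rewrite /Rdiv Rmult_assoc Rinv_l; lra. }
  have Hxr : xt = r * x0 gam by rewrite /r; field; lra.
  set a := Rpower r (gam/2). set e := Rpower r (1 - gam/2). set w := Rpower r (1 - gam).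
  have Hwa : w * a = e. rewrite /w /a /e -Rpower_plus; congr (Rpower r _); field.
  have Hra : r = a * e by rewrite /a /e -Rpower_plus -{1}(Rpower_1 r); [congr (Rpower r _); field | lra].
  have He1 : e < 1 by rewrite /e; have := Rpower_lt r (1-gam/2) 0 Hr ltac:(lra); rewrite Rpower_O; lra.
  have Hw1 : w < 1 by rewrite /w; have := Rpower_lt r (1-gam) 0 Hr ltac:(lra); rewrite Rpower_O; lra.
  have Ha1 : 1 < a by rewrite /a; have := Rpower_lt r 0 (gam/2) Hr ltac:(lra); rewrite Rpower_O; lra.
  have He0 : 0 < e by apply Rpower_pos. have Hw0 : 0 < w by apply Rpower_pos.
  have HAsc : Af gam xt = Rpower r (2 - gam) * Af gam (x0 gam).
  { rewrite /Af Hxr -Rpower_mult_distr; lra. }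
  have HsAsc : sqrt (Af gam xt) = e * sqrt (Af gam (x0 gam)).
  { rewrite HAsc sqrt_mult_alt; [|left; apply Rpower_pos]. f_equal.
    rewrite -Rpower_sqrt; [|apply Rpower_pos]. rewrite Rpower_mult /e. f_equal. field. }
  have HDsc : Df gam xt = w * Df gam (x0 gam).
  { rewrite /Df Hxr -Rpower_mult_distr; [rewrite /w /Rdiv; ring | lra | lra]. }
  have HD0 := Df_pos gam _ Hg Hx0.
  set sA0 := sqrt (Af gam (x0 gam)) in HsA0 HsAsc R0 Hopt0.
  set u0 := K * x0 gam / sA0.
  have Hu0 : 0 <= u0 by apply divnn; [apply Rmult_le_pos; lra | lra].
  have Harg : K * xt / sqrt (Af gam xt) = a * u0.
  { rewrite HsAsc Hxr Hra /u0. field. lra. }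
  rewrite Harg HsAsc HDsc in R1.
  set D0 := Df gam (x0 gam) in R0 R1 HD0.
  have Hphi : phi (a * u0) <= a * phi u0.
  { have Ha0 : 0 < a by lra.
    have Hia : 0 < / a <= 1.
    { split. apply Rinv_0_lt_compat; lra. rewrite -Rinv_1. apply Rinv_le_contravar; lra. }
    have := Hconc (a * u0) 0 (/ a) (ltac:(nra)) (ltac:(lra)) (ltac:(lra)).
    replace (/ a * (a * u0) + (1 - / a) * 0) with u0 by (field; lra).
    have := Hnn 0 (Rle_refl 0). intros H0 H.
    have : / a * phi (a * u0) <= phi u0 by nra.
    intro H2. replace (phi (a * u0)) with (a * (/ a * phi (a * u0))) by (field; lra).
    apply Rmult_le_compat_l; lra. }
  have Hsec : 0 <= lam * (k1 - k2) * sA0 * Yp.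
  { apply Rmult_le_pos; [|lra]. apply Rmult_le_pos; [|lra]. apply Rmult_le_pos; lra. }
  have Hle : revenue phi lam gam bet xt yt B1 <= e * revenue phi lam gam bet (x0 gam) yt B1.
  { rewrite R1 R0. rewrite -Hwa.
    have : phi (a * u0) * (w * D0) <= a * phi u0 * (w * D0).
    { apply Rmult_le_compat_r; [|auto]. apply Rmult_le_pos; lra. }
    change (K * x0 gam / sA0) with u0.
    have E : w * a * (phi u0 * D0 + lam * (k1 - k2) * sA0 * Yp) = a * phi u0 * (w * D0) + lam * (k1 - k2) * (w * a * sA0) * Yp by ring.
    rewrite E; lra. }
  destruct (Rlt_or_le 0 (phi u0)) as [Hp|Hp].
  - have Hpos : 0 < revenue phi lam gam bet (x0 gam) yt B1.
    { rewrite R0. change (K * x0 gam / sA0) with u0. have := Rmult_lt_0_compat _ _ Hp HD0. lra. }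
    have Hfe : k1 / sA0 >= k2 / sA0.
    { apply Rle_ge. rewrite /Rdiv. apply Rmult_le_compat_r; [left; apply Rinv_0_lt_compat; lra | lra]. }
    have := Hopt0 (conj (Rle_refl _) (conj Hy (conj Hfe HB))).
    have := Rmult_lt_compat_r _ _ _ Hpos He1. lra.
  - have Hu00 : u0 = 0.
    { destruct Hu0 as [Hu0|]; auto. have := Hmono 0 u0 (Rle_refl 0) Hu0. have := Hnn 0 (Rle_refl 0). lra. }
    have HK0 : K = 0.
    { destruct HK as [HK|]; auto. exfalso. have : 0 < u0.
      { rewrite /u0 /Rdiv. apply Rmult_lt_0_compat. nra. apply Rinv_0_lt_compat; lra. } lra. }
    have Hk10 : k1 = 0.
    { have := Rmult_le_pos _ _ Hk2 HYF. rewrite /K in HK0. nra. }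
    have Hk20 : k2 = 0 by lra.
    have Hrt : revenue phi lam gam bet xt yt B1 <= phi 0 * D0.
    { rewrite R1 Hu00 Rmult_0_r Hk10 Hk20. have H0 := Hnn 0 (Rle_refl 0).
      replace (lam * (0 - 0) * (e * sA0) * Yp) with 0 by ring.
      have H1 : w * D0 <= D0 by nra.
      have := Rmult_le_compat_l _ _ _ H0 H1. lra. }
    have HB' : 0 <= 1 <= 1 by lra.
    have R2 := rev_eq phi lam gam bet (x0 gam) (y0 bet) 1 Hg Hb Hx0 (Rle_refl _) HB'.
    have Hopt2 := Hopt (x0 gam) (y0 bet) 1.
    rewrite /feasible in Hopt2. rewrite s1_eq in Hopt2; try lra. rewrite s2_eq in Hopt2; try lra.
    replace (1 - 1) with 0 in R2 by ring. replace (1 - 1) with 0 in Hopt2 by ring.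
    have E : sqrt (0 * T0 gam bet) / sqrt (Yf bet (y0 bet)) = 0.
    { rewrite Rmult_0_l sqrt_0 /Rdiv Rmult_0_l. done. }
    rewrite E in R2 Hopt2. rewrite -/sA0 in R2 Hopt2. rewrite -/D0 in R2.
    have HAp := Af_pos bet _ Hb Hy0.
    have Hk1' : 0 < sqrt (1 * T0 gam bet) / sqrt (Af bet (y0 bet)).
    { apply Rdiv_lt_0_compat; apply sqrt_lt_R0; lra. }
    set k1' := sqrt (1 * T0 gam bet) / sqrt (Af bet (y0 bet)) in R2 Hopt2 Hk1'.
    set u' := (0 * Yf bet (y0 bet) + k1' * Af bet (y0 bet)) * x0 gam / sA0 in R2.
    have Hu' : 0 < u'.
    { rewrite /u' /Rdiv. apply Rmult_lt_0_compat; [|apply Rinv_0_lt_compat; lra].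
      apply Rmult_lt_0_compat; [|lra]. rewrite Rmult_0_l Rplus_0_l. nra. }
    have Hphi' := Hmono 0 u' (Rle_refl 0) Hu'.
    have Hrev' : phi 0 * D0 < revenue phi lam gam bet (x0 gam) (y0 bet) 1.
    { rewrite R2. have : 0 <= lam * (k1' - 0) * sA0 * Af bet (y0 bet).
      { apply Rmult_le_pos; [|lra]. apply Rmult_le_pos; [|lra]. apply Rmult_le_pos; lra. }
      have := Rmult_lt_compat_r D0 _ _ HD0 Hphi'. lra. }
    have Hfe : k1' / sA0 >= 0 / sA0.
    { apply Rle_ge. rewrite /Rdiv. apply Rmult_le_compat_r; [left; apply Rinv_0_lt_compat; lra | lra]. }
    have := Hopt2 (conj (Rle_refl _) (conj (Rle_refl _) (conj Hfe HB'))).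
    lra.
Qed.
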